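(* For any integer $m>3$: (1) $|V(J'(m,2))|=\binom{m}{2}+m$; (2) $\operatorname{cc}(J'(m,2))=m$; (3) $Z_+(J'(m,2))=\binom{m}{2}$; (4) $Z_+(J'(m,2))=|V(J'(m,2))|-\operatorname{cc}(J'(m,2))$.
   Context: $J'(m,2)$ is the graph whose vertices are all the sets $\{i,j\}$ ($i\ne j$) and $\{i\}$ with $i,j\in\{1,\dots,m\}$, two vertices being adjacent iff the sets have non-empty intersection. $\operatorname{cc}(G)$ is the minimum number of cliques needed to cover all edges of $G$. $Z_+(G)$ is the positive zero forcing number: the minimum size of a set $B$ of initially black vertices such that repeated application of the rule ''let $W_1,\dots,W_k$ be the vertex sets of components of $G$ minus the black vertices; a black vertex $u$ whose only white neighbour in the subgraph induced by $W_i\cup(\text{black vertices})$ is $w$ may turn $w$ black'' eventually makes all vertices black. *)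

(* Defs.v *)
From mathcomp Require Import all_boot.
Set Implicit Arguments. Unset Strict Implicit. Unset Printing Implicit Defensive.

Section Generic.
Variables (T : finType) (e : rel T).

Definition is_clique (A : {set T}) : bool :=
  [forall x in A, forall y in A, (x != y) ==> e x y].

Definition edge_clique_cover (F : {set {set T}}) : bool :=
  [forall A in F, is_clique A] &&
  [forall x, forall y, e x y ==> [exists A in F, (x \in A) && (y \in A)]].

Definition cc : nat :=
  \big[minn/#|{set T}|]_(F : {set {set T}} | edge_clique_cover F) #|F|.

Definition white_rel (B : {set T}) : rel T :=
  fun x y => [&& e x y, x \notin B & y \notin B].

Definition can_force (B : {set T}) (u w : T) : bool :=
  [&& u \in B, w \notin B, e u w &
   [forall x, ((x \notin B) && connect (white_rel B) w x && e u x) ==> (x == w)]].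

Definition force_step (B : {set T}) : {set T} :=
  B :|: [set w | [exists u, can_force B u w]].

(* The forcing process is inflationary, so #|T| rounds reach its closure. *)
Definition pzf_set (B : {set T}) : bool :=
  iter #|T| force_step B == [set: T].

Definition Zplus : nat :=
  \big[minn/#|T|]_(B : {set T} | pzf_set B) #|B|.

End Generic.

(* Vertices of J'(m,2): subsets of {1..m} (here 'I_m) of size 1 or 2. *)
Definition Jv (m : nat) : predArgType :=
  {A : {set 'I_m} | (#|A| == 1) || (#|A| == 2)}.

Definition Jadj (m : nat) : rel (Jv m) :=
  fun A B => (A != B) && (val A :&: val B != set0).
Arguments Jadj m : clear implicits.

(* Main.v *)
Require Import Defs.
From mathcomp Require Import all_boot zify.
Set Implicit Arguments. Unset Strict Implicit. Unset Printing Implicit Defensive.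
Definition gpot (T : finType) (F : {set {set T}}) (B : {set T}) := #|[set Q in F | ~~ (Q \subset B)]|.

Lemma fs_sub (T : finType) (e : rel T) (B : {set T}) : B \subset force_step e B.
Proof. exact: subsetUl. Qed.

Lemma step_ineq (T : finType) (e : rel T) (F : {set {set T}}) (hF : edge_clique_cover e F) (B : {set T}) : #|~: B| + gpot F (force_step e B) <= #|~: force_step e B| + gpot F B.
Proof.
set B' := force_step e B.
have sBB' : B \subset B' by exact: fs_sub.
set N := B' :\: B.
have hN : #|~: B| = #|~: B'| + #|N|.
  have c1 := cardsC B; have c2 := cardsC B'.
  have c3 : #|N| = #|B'| - #|B| by rewrite /N cardsD (setIidPr sBB').
  have c4 := subset_leq_card sBB'. lia.
set D := [set Q in F | ~~ (Q \subset B) && (Q \subset B')].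
have hg : gpot F B = gpot F B' + #|D|.
  rewrite /gpot.
  have -> : [set Q in F | ~~ (Q \subset B)] =
            [set Q in F | ~~ (Q \subset B')] :|: D.
    apply/setP=> Q; rewrite !inE.
    case: (Q \in F) => //=.
    case hQ : (Q \subset B'); rewrite ?orbF ?orbT /= ?andbT //.
    apply/negP => hQB; by rewrite (subset_trans hQB sBB') in hQ.
  rewrite cardsU.
  have -> : [set Q in F | ~~ (Q \subset B')] :&: D = set0.
    apply/setP=> Q; rewrite !inE.
    by case: (Q \in F); case: (Q \subset B'); rewrite ?andbF ?andbT.
  by rewrite cards0 subn0.
suff : #|N| <= #|D| by rewrite hN hg; lia.
have <- : #|[set [set w] | w in N]| = #|N| by apply: card_imset; exact: set1_inj.
apply: (leq_trans _ (leq_imset_card (fun Q => Q :&: ~: B) D)).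
apply: subset_leq_card; apply/subsetP => S /imsetP [w wN ->].
move: wN; rewrite /N /B' /force_step !inE.
case/andP => wB /orP [wB' | /existsP [u]]; first by rewrite wB' in wB.
case/and4P => uB wB2 euw /forallP hx.
case/andP: hF => /forallP hcl /forallP hcov.
move: (hcov u) => /forallP /(_ w) /implyP /(_ euw) /existsP [Q /and3P [QF uQ wQ]].
have clQ := hcl Q; rewrite QF /= in clQ.
have hQw : Q :&: ~: B = [set w].
  apply/setP=> x; rewrite !inE.
  apply/idP/idP; last by move/eqP->; rewrite wQ.
  case/andP=> xQ xB; apply/negPn/negP => xw.
  have xu : u != x by apply/negP => /eqP ux; rewrite -ux uB in xB.
  have eux : e u x.
    by move/forallP: clQ => /(_ u) /implyP /(_ uQ) /forallP /(_ x) /implyP /(_ xQ) /implyP /(_ xu).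
  have ewx : e w x.
    have wx : w != x by rewrite eq_sym.
    by move/forallP: clQ => /(_ w) /implyP /(_ wQ) /forallP /(_ x) /implyP /(_ xQ) /implyP /(_ wx).
  have cwx : connect (white_rel e B) w x.
    by apply: connect1; rewrite /white_rel ewx xB wB.
  by move: (hx x); rewrite xB cwx eux /= => /eqP xw'; rewrite xw' eqxx in xw.
apply/imsetP; exists Q; last by rewrite hQw.
rewrite inE QF /=; apply/andP; split.
  by apply/negP => /subsetP /(_ w wQ); rewrite (negbTE wB).
apply/subsetP => x xQ; rewrite inE.
case xB: (x \in B) => //=.
have : x \in Q :&: ~: B by rewrite !inE xQ xB.
rewrite hQw inE => /eqP ->; rewrite inE; apply/existsP; exists u.
by rewrite /can_force uB wB euw; apply/forallP.
Qed.

Lemma iter_ineq n (T : finType) (e : rel T) (F : {set {set T}}) (hF : edge_clique_cover e F) (B : {set T}) : #|~: B| + gpot F (iter n (force_step e) B) <= #|~: iter n (force_step e) B| + gpot F B.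
Proof.
elim: n => [|n IH] /=; first by [].
have := step_ineq hF (iter n (force_step e) B); lia.
Qed.

Lemma pzf_bound (T : finType) (e : rel T) (F : {set {set T}}) (hF : edge_clique_cover e F) (B : {set T}) : pzf_set e B -> #|T| - #|B| <= #|F|.
Proof.
move/eqP => h; have := iter_ineq #|T| hF B; rewrite h setCT cards0 add0n => h2.
have h3 : gpot F B <= #|F|.
  by apply: subset_leq_card; apply/subsetP => Q; rewrite inE => /andP [].
have := cardsC B; lia.
Qed.

Lemma cardJ (m : nat) : #|Jv m| = 'C(m, 2) + m.
Proof.
rewrite card_sub.
have -> : #|[pred A : {set 'I_m} | (#|A| == 1) || (#|A| == 2)]| =
          #|[set A : {set 'I_m} | #|A| == 1] :|: [set A : {set 'I_m} | #|A| == 2]|.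
  by apply: eq_card => A; rewrite !inE.
rewrite cardsU !card_draws card_ord bin1.
have -> : [set A : {set 'I_m} | #|A| == 1] :&: [set A : {set 'I_m} | #|A| == 2] = set0.
  by apply/setP => A; rewrite !inE; case/boolP: (#|A| == 1) => [/eqP->|].
by rewrite cards0 subn0 addnC.
Qed.

Definition K (m : nat) (i : 'I_m) : {set Jv m} := [set A : Jv m | i \in val A].
Definition FK (m : nat) : {set {set Jv m}} := [set K i | i : 'I_m].

Definition sing (m : nat) (i : 'I_m) : Jv m.
Proof. exists [set i]. by rewrite cards1. Defined.

Lemma cardFK (m : nat) : #|FK m| = m.
Proof.
rewrite card_imset ?card_ord // => i j hij.
have : sing i \in K j by rewrite -hij inE /= set11.
by rewrite inE /= inE => /eqP.
Qed.

Lemma coverFK (m : nat) : edge_clique_cover (Jadj m) (FK m).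
Proof.
apply/andP; split.
  apply/forallP => Q; apply/implyP => /imsetP [i _ ->].
  apply/forallP => x; apply/implyP; rewrite inE => xi.
  apply/forallP => y; apply/implyP; rewrite inE => yi.
  apply/implyP => xy; rewrite /Jadj xy /=.
  by apply/set0Pn; exists i; rewrite inE xi yi.
apply/forallP => x; apply/forallP => y; apply/implyP => /andP [_ /set0Pn [i]].
rewrite inE => /andP [xi yi].
apply/existsP; exists (K i); by rewrite imset_f //= !inE xi yi.
Qed.

Definition B0 (m : nat) : {set Jv m} := [set A : Jv m | #|val A| == 2].

Lemma cardB0 (m : nat) : #|B0 m| = 'C(m, 2).
Proof.
rewrite -(card_imset _ val_inj); have := card_draws 'I_m 2; rewrite card_ord => <-.
apply: eq_card => A; rewrite [in RHS]inE; apply/imsetP/idP.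
  by case=> x; rewrite inE => /eqP h ->; rewrite h.
move=> hA. have hA' : (#|A| == 1) || (#|A| == 2) by rewrite hA orbT.
by exists (Sub A hA'); rewrite ?inE //=.
Qed.

Lemma white_sing (m : nat) (A : Jv m) : A \notin B0 m -> exists i, val A = [set i].
Proof.
rewrite inE => h; case/orP: (valP A) => [/cards1P //|h2]; by rewrite h2 in h.
Qed.

Lemma white_iso (m : nat) (A y : Jv m) : A \notin B0 m -> ~~ white_rel (Jadj m) (B0 m) A y.
Proof.
move=> hA; apply/negP; rewrite /white_rel /Jadj => /and3P [/andP [Ay hx] _ hy].
case/set0Pn: hx => x.
have [i hi] := white_sing hA; have [j hj] := white_sing hy.
rewrite inE hi hj !inE => /andP [/eqP xi /eqP xj].
by move: Ay; rewrite -(inj_eq val_inj) hi hj -xi -xj eqxx.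
Qed.

Lemma fsB0 (m : nat) (hm : 3 < m) : force_step (Jadj m) (B0 m) = setT.
Proof.
apply/setP => A; rewrite in_setT /force_step in_setU.
case/boolP: (A \in B0 m) => hA //=; rewrite inE.
have [i hi] := white_sing hA.
have h0 : 0 < m by lia. have h1 : 1 < m by lia.
pose j : 'I_m := if val i == 0 then Ordinal h1 else Ordinal h0.
have ij : i != j.
  by rewrite /j; case: ifP => h; apply/negP => /eqP /(congr1 val) /=; move/eqP: h => //= ->.
have hu : (#|[set i; j]| == 1) || (#|[set i; j]| == 2) by rewrite cards2 ij orbT.
pose u : Jv m := Sub [set i; j] hu.
apply/existsP; exists u.
have uB : u \in B0 m by rewrite inE /= cards2 ij.
have Au : u != A by apply/negP => /eqP ue; rewrite -ue uB in hA.
rewrite /can_force uB hA /Jadj Au /=; apply/andP; split.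
  by apply/set0Pn; exists i; rewrite hi !inE eqxx.
apply/forallP => x; apply/implyP => /andP [/andP [_ /connectP [p hp ->]] _].
case: p hp => [//|y p] /= /andP [hy _].
by move: (white_iso y hA); rewrite hy.
Qed.

Lemma pzfB0 (m : nat) (hm : 3 < m) : pzf_set (Jadj m) (B0 m).
Proof.
rewrite /pzf_set.
have : 0 < #|Jv m| by rewrite cardJ; lia.
case: #|Jv m| => [//|n] _.
suff -> : iter n.+1 (force_step (Jadj m)) (B0 m) = setT by [].
elim: n => [|n IH]; first by rewrite /= fsB0.
rewrite iterS IH; apply/eqP; rewrite eqEsubset subsetT /=; exact: fs_sub.
Qed.

Lemma bigmin_le (I : finType) (P : pred I) (F : I -> nat) x0 i :
  P i -> \big[minn/x0]_(j | P j) F j <= F i.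
Proof.
move=> Pi; rewrite /index_enum.
have : i \in index_enum I by rewrite mem_index_enum.
rewrite /index_enum.
elim: (Finite.enum I) => [//|a r IH]; rewrite inE big_cons.
case/orP => [/eqP <-|ir]; first by rewrite Pi geq_minl.
case: (P a); last exact: IH.
by rewrite geq_min IH ?orbT.
Qed.

Theorem mainTheorem14 (m : nat) (hm : 3 < m) :
  [/\ #|Jv m| = 'C(m, 2) + m,
      cc (Jadj m) = m,
      Zplus (Jadj m) = 'C(m, 2) &
      Zplus (Jadj m) = #|Jv m| - cc (Jadj m)].
Proof.
have cJ := cardJ m.
have hZ : Zplus (Jadj m) = 'C(m, 2).
  apply/eqP; rewrite eqn_leq; apply/andP; split.
    by rewrite -(cardB0 m); apply: bigmin_le; exact: pzfB0.
  rewrite /Zplus; apply: (big_ind (fun x => 'C(m, 2) <= x)).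
  - by rewrite cJ leq_addr.
  - by move=> x y hx hy; rewrite leq_min hx hy.
  - move=> B hB; have := pzf_bound (coverFK m) hB; rewrite cardFK cJ; lia.
have hc : cc (Jadj m) = m.
  apply/eqP; rewrite eqn_leq; apply/andP; split.
    have := @bigmin_le _ (edge_clique_cover (Jadj m)) (fun F => #|F|) #|{set Jv m}| _ (coverFK m); by rewrite cardFK.
  rewrite /cc; apply: (big_ind (fun x => m <= x)).
  - by rewrite -{1}(cardFK m) max_card.
  - by move=> x y hx hy; rewrite leq_min hx hy.
  - move=> F hF; have := pzf_bound hF (pzfB0 hm); rewrite cardB0 cJ; lia.
split => //; rewrite hZ hc cJ; lia.
Qed.
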